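(* Let $(\xi_n)_{n\ge0}$ be a real-valued process adapted to a filtration $(\mathcal F_n)_{n\ge0}$, and suppose there exist $a\in\mathbb R$ and $b>0$ such that: (1) $\mathbb E\big((\xi_{k+1}-\xi_k)1_{\{\xi_k\ge a\}}\mid\mathcal F_k\big)\le 0$ a.s. for all $k$; (2) $\limsup_{k\to\infty}1_{\{\xi_k<a<\xi_{k+1}\}}(\xi_{k+1}-a)\le b$ almost surely; (3) $\sum_k\mathbb E\big[(\xi_{k+1}-\xi_k)^2 1_{\{\xi_k\ge a\}}\big]<\infty$. Then $\limsup_{n\to\infty}\xi_n<\infty$ almost surely. *)

(* Defs.v *)
From HB Require Import structures.
From mathcomp Require Import all_boot all_order all_algebra.
From mathcomp Require Import all_classical all_reals all_analysis.
Set Implicit Arguments. Unset Strict Implicit. Unset Printing Implicit Defensive.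
Import Order.TTheory GRing.Theory Num.Theory.
Local Open Scope classical_set_scope.
Local Open Scope ring_scope.

(* A sub-sigma-algebra G of the ambient one, and "E(X | G) <= 0 a.s.":
   X is integrable and some (equivalently every) version Y of the conditional
   expectation of X given G (G-measurable, integrable, with the same integrals
   as X over every G-set) satisfies Y <= 0 almost surely. *)
Definition G_measurable_fun {T : Type} {R : realType} (G : set (set T)) (Y : T -> R) :=
  forall B : set R, measurable B -> G (Y @^-1` B).

Definition cond_exp_le0 {d : measure_display} {T : measurableType d} {R : realType}
  (P : probability T R) (G : set (set T)) (X : T -> R) : Prop :=
  P.-integrable setT (EFin \o X) /\
  exists Y : T -> R,
    [/\ G_measurable_fun G Y,
        P.-integrable setT (EFin \o Y),
        (forall A, G A -> (\int[P]_(w in A) (Y w)%:E = \int[P]_(w in A) (X w)%:E)%E)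
      & {ae P, forall w, Y w <= 0}].

Definition filtration {d : measure_display} {T : measurableType d} (F : nat -> set (set T)) :=
  [/\ forall n, sigma_algebra setT (F n),
      forall n, F n `<=` measurable
    & forall n, F n `<=` F n.+1].

Definition adapted {T : Type} {R : realType} (F : nat -> set (set T)) (xi : nat -> T -> R) :=
  forall n, G_measurable_fun (F n) (xi n).

(* Main.v *)
Require Import Defs.
From HB Require Import structures.
From mathcomp Require Import all_boot all_order all_algebra.
From mathcomp Require Import all_classical all_reals all_analysis.
From mathcomp Require Import measurable_realfun.
From mathcomp Require Import ring lra.
Import Order.TTheory GRing.Theory Num.Theory.
Local Open Scope classical_set_scope.
Local Open Scope ring_scope.
Lemma set_le0 (d : measure_display) (T : measurableType d) (R : realType)
  (P : probability T R) (G : set (set T)) (X : T -> R) (A : set T) :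
  cond_exp_le0 P G X -> G A -> measurable A ->
  (\int[P]_(w in A) (X w)%:E <= 0)%E.
Proof.
move=> [iX [Y [mY iY eqY aeY]]] GA mA.
rewrite -eqY //.
have mYm : measurable_fun A (EFin \o Y).
  exact: measurable_funTS (measurable_int _ iY).
rewrite integralE.
rewrite -[0%E]sube0.
apply: leeB; last exact: integral_ge0.
rewrite -(integral0 P A).
apply: ae_ge0_le_integral => //.
- exact: measurable_funepos.
- apply: filterS aeY => w Yw _ /=.
  by rewrite funeposE /= ge_max lexx lee_fin Yw.
Qed.
Arguments set_le0 {d T R P G X A}.

Lemma bounded_le (T : Type) (R : realType) (f : T -> R) (M : R) :
  (forall x, `|f x| <= M) -> [bounded f x : R^o | x in setT].
Proof.
move=> fM; exists M; split; first exact: num_real.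
by move=> r Mr x _; apply: le_trans (fM x) (ltW Mr).
Qed.

Lemma Gmeas_meas (d : measure_display) (T : measurableType d) (R : realType)
  (G : set (set T)) (g : T -> R) :
  G `<=` measurable -> G_measurable_fun G g -> measurable_fun setT g.
Proof. by move=> GP mg _ B mB; rewrite setTI; apply: GP; exact: mg. Qed.

Lemma le0_of_le_div (R : realType) (r c : R) :
  0 <= c -> (forall m : nat, (0 < m)%N -> r <= c / m%:R) -> r <= 0.
Proof.
move=> c0 H; rewrite leNgt; apply/negP => r0.
pose m := (Num.trunc (c / r)).+1.
have := H m isT.
have mpos : 0 < (m%:R : R) by rewrite ltr0n.
rewrite ler_pdivlMr // => hr.
have : c / r < m%:R by exact: truncnS_gt.
rewrite ltr_pdivrMr // => hc.
have := le_lt_trans hr hc.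
by rewrite mulrC ltxx.
Qed.

Lemma weight_le0 (d : measure_display) (T : measurableType d) (R : realType)
  (P : probability T R) (G : set (set T)) (X g : T -> R) (M : R) :
  cond_exp_le0 P G X -> G `<=` measurable -> G_measurable_fun G g ->
  (forall w, 0 <= g w <= M) ->
  (\int[P]_w ((g w * X w)%:E) <= 0)%E.
Proof.
move=> cX GP mgG g0M.
have [iX _] := cX.
have mX : measurable_fun setT X by exact/measurable_EFinP/(measurable_int _ iX).
have mg : measurable_fun setT g := @Gmeas_meas _ _ _ G g GP mgG.
have M0 : 0 <= M by have /andP[h1 h2] := g0M point; exact: le_trans h2.
have bg : [bounded g x : R^o | x in setT].
  by apply: (@bounded_le _ _ _ M) => x; have /andP[h1 h2] := g0M x; rewrite ger0_norm.
have igX : P.-integrable setT (EFin \o (fun w => g w * X w)).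
  by apply: (eq_integrable measurableT _ _ _ (integrableMr measurableT mg bg iX)) => // x _.
have iaX : P.-integrable setT (EFin \o (Num.norm \o X)) by exact: integrable_norm.
have Ifin := integrable_fin_num measurableT igX.
have Cfin := integrable_fin_num measurableT iaX.
set I := (\int[P]_w _)%E in Ifin *.
set C := (\int[P]_w _)%E in Cfin.
have C0 : (0 <= C)%E.
  rewrite /C. apply: integral_ge0 => x _ /=. by rewrite lee_fin normr_ge0.
rewrite -(fineK Ifin) lee_fin.
apply: (@le0_of_le_div _ _ (fine C)); first by rewrite fine_ge0.
move=> m m0.
have mpos : 0 < (m%:R : R) by rewrite ltr0n.
rewrite -lee_fin fineK //.
pose J := Num.trunc (m%:R * M).
pose A j := g @^-1` `[j%:R / m%:R, j.+1%:R / m%:R[.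
have GA j : G (A j) by apply: mgG; exact: measurable_itv.
have mA j : measurable (A j) by exact: GP.
pose S w := \sum_(j < J.+1) (j%:R / m%:R) * (\1_(A j) w * X w).
have iAX j : P.-integrable setT (EFin \o (fun w => \1_(A j) w * X w)).
  apply: (eq_integrable measurableT _ _ _ (integrableMr measurableT (measurable_indic (mA j)) _ iX)) => //.
  apply: (@bounded_le _ _ _ 1) => x; rewrite indicE; case: (_ \in _) => /=.
    by rewrite normr1.
  by rewrite normr0.
have iS : P.-integrable setT (EFin \o S).
  have h : P.-integrable setT (fun w => \sum_(j <- index_enum 'I_J.+1 | xpredT j)
      ((j%:R / m%:R)%:E * (\1_(A j) w * X w)%:E)%E).
    by apply: integrable_sum => // j _; exact: (integrableZl measurableT _ (iAX j)).
  apply: (eq_integrable measurableT _ _ _ h) => x _ /=.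
  by rewrite /S -sumEFin.
have iXm : P.-integrable setT (EFin \o (fun w => `|X w| / m%:R)).
  by apply: (eq_integrable measurableT _ _ _ (integrableZr measurableT (m%:R^-1) iaX)) => // x _.
have pw w : g w * X w <= S w + `|X w| / m%:R.
  have /andP[g0 gM] := g0M w.
  have mg0 : 0 <= m%:R * g w by rewrite mulr_ge0 // ltW.
  pose k := Num.trunc (m%:R * g w).
  have kJ : (k < J.+1)%N.
    rewrite ltnS truncn_ge_nat ?mulr_ge0 ?(ltW mpos) //.
    have /andP[h _] := truncn_itv mg0.
    by apply: le_trans h _; rewrite ler_pM2l.
  have indE j : \1_(A j) w = ((j : nat) == k)%:R :> R.
    rewrite indicE; congr (_%:R); congr (nat_of_bool _); rewrite eq_sym truncn_eq //.
    rewrite [LHS](_ : _ = (j%:R / m%:R <= g w < j.+1%:R / m%:R)); last first.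
      by apply/idP/idP => [/set_mem | h]; rewrite /A /preimage /= ?in_itv //; apply/mem_set; rewrite /= in_itv.
    by rewrite ler_pdivrMr // ltr_pdivlMr // (mulrC (g w)).
  have SE : S w = k%:R / m%:R * X w.
    rewrite /S (bigD1 (Ordinal kJ)) //= indE eqxx /= mul1r big1 ?addr0 // => j hj.
    rewrite indE; case: eqP => [hjk|_]; last by rewrite mul0r mulr0.
    by move: hj; rewrite -(inj_eq val_inj) /= hjk eqxx.
  have /andP[itv1 itv2] := truncn_itv mg0.
  rewrite -/k in itv1 itv2.
  have h1 : 0 <= g w - k%:R / m%:R.
    by rewrite subr_ge0 ler_pdivrMr // mulrC.
  have h2 : g w - k%:R / m%:R <= m%:R^-1.
    rewrite lerBlDr (_ : m%:R^-1 + k%:R / m%:R = (k%:R + 1) / m%:R); last first.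
      by rewrite mulrDl mul1r addrC.
    by rewrite ler_pdivlMr // mulrC natr1 ltW.
  have key : (g w - k%:R / m%:R) * X w <= `|X w| / m%:R.
    apply: le_trans (ler_norm _) _.
    rewrite normrM (ger0_norm h1) mulrC.
    by apply: ler_wpM2l => //; exact: normr_ge0.
  rewrite SE; rewrite mulrBl in key.
  by rewrite -lerBlDl.
have iR : P.-integrable setT (EFin \o (fun w => S w + `|X w| / m%:R)).
  by apply: (eq_integrable measurableT _ _ _ (integrableD measurableT iS iXm)) => x _.
apply: (le_trans (le_integral measurableT igX iR _)).
  by move=> x _; rewrite lee_fin; exact: pw.
rewrite [Z in (Z <= _)%E](_ : _ = (\int[P]_x (EFin \o S) x +
   \int[P]_x (EFin \o (fun w => (`|X w| / m%:R)%R)) x)%E); last first.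
  exact: integralD_EFin.
have eS : (\int[P]_x (EFin \o S) x <= 0)%E.
  rewrite (eq_integral (fun w => \sum_(j <- index_enum 'I_J.+1 | xpredT j)
      ((j%:R / m%:R)%:E * (\1_(A j) w * X w)%:E)%E)); last first.
    by move=> x _; rewrite /= /S -sumEFin.
  rewrite integral_sum //; last first.
    by move=> j; exact: (integrableZl measurableT _ (iAX j)).
  apply: sume_le0 => j _.
  rewrite (integralZl measurableT (iAX j)); apply: mule_ge0_le0.
    by rewrite lee_fin divr_ge0.
  rewrite (eq_integral (fun w => ((EFin \o X) \_ (A j)) w)); last first.
    move=> x _; rewrite /patch /= /indic.
    by case: (x \in A j); rewrite /= ?mul1r ?mul0r.
  rewrite -integral_mkcond.
  exact: (set_le0 cX (GA j) (mA j)).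
have eX : (\int[P]_x (EFin \o (fun w => (`|X w| / m%:R)%R)) x = (fine C / m%:R)%:E)%E.
  rewrite (eq_integral (fun w => ((EFin \o (Num.norm \o X)) w * (m%:R^-1)%:E)%E)); last first.
    by move=> x _.
  by rewrite integralZr // -/C -(fineK Cfin) -EFinM fineK.
rewrite eX; rewrite -[X in (_ <= X)%E]add0e.
by apply: leeD.
Qed.
Lemma GmeasP (d : measure_display) (T : measurableType d) (R : realType)
  (G : set (set T)) (sG : sigma_algebra setT G) (f : T -> R) :
  G_measurable_fun G f <-> measurable_fun (setT : set (g_sigma_algebraType G)) f.
Proof.
have E := measurable_g_measurableTypeE sG.
split.
- move=> h _ B mB; rewrite setTI E; exact: h.
- move=> h B mB; have := h measurableT B mB; rewrite setTI E; exact.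
Qed.

Arguments GmeasP {d T R G} sG {f}.

Fixpoint Uf (T : Type) (R : realType) (Dn : nat -> T -> R) (i : nat) (w : T) : R :=
  match i with
  | 0 => 0
  | i'.+1 => if 1 <= Uf T R Dn i' w then Uf T R Dn i' w
             else if 0 <= Uf T R Dn i' w + Dn i' w then Uf T R Dn i' w + Dn i' w else 0
  end.
Arguments Uf {T R}.

Lemma UfS (T : Type) (R : realType) (Dn : nat -> T -> R) (i : nat) :
  Uf Dn i.+1 = (fun w => if 1 <= Uf Dn i w then Uf Dn i w
             else if 0 <= Uf Dn i w + Dn i w then Uf Dn i w + Dn i w else 0).
Proof. by []. Qed.

Lemma Uf_meas (d : measure_display) (T : measurableType d) (R : realType)
  (H : nat -> set (set T)) (Dn : nat -> T -> R) :
  (forall i, sigma_algebra setT (H i)) -> (forall i, H i `<=` H i.+1) ->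
  (forall i, G_measurable_fun (H i.+1) (Dn i)) ->
  forall i, G_measurable_fun (H i) (Uf Dn i).
Proof.
move=> sH Hinc mD; elim=> [|i IH].
  by apply/(GmeasP (sH 0)); exact: measurable_cst.
apply/(GmeasP (sH i.+1)).
have mu : measurable_fun (setT : set (g_sigma_algebraType (H i.+1))) (Uf Dn i).
  by apply/(GmeasP (sH i.+1)) => B mB; apply: Hinc; exact: IH.
have mDi : measurable_fun (setT : set (g_sigma_algebraType (H i.+1))) (Dn i).
  exact/(GmeasP (sH i.+1)).
rewrite UfS; apply: measurable_fun_ifT => //.
  by apply: measurable_fun_ler => //; exact: measurable_cst.
apply: measurable_fun_ifT.
- by apply: measurable_fun_ler; [exact: measurable_cst | exact: measurable_funD].
- exact: measurable_funD.
- exact: measurable_cst.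
Qed.

Lemma Uf_ge0 (T : Type) (R : realType) (Dn : nat -> T -> R) i w : 0 <= Uf Dn i w.
Proof.
elim: i => [|i IH] //=.
by case: ifP => // _; case: ifP.
Qed.

Lemma Uf_mono (T : Type) (R : realType) (Dn : nat -> T -> R) i w :
  1 <= Uf Dn i w -> 1 <= Uf Dn i.+1 w.
Proof. by move=> h /=; rewrite h. Qed.

Lemma Uf_step (T : Type) (R : realType) (Dn : nat -> T -> R) i w :
  Uf Dn i.+1 w ^+ 2 <= Uf Dn i w ^+ 2 +
    (if 1 <= Uf Dn i w then 0 else 2 * Uf Dn i w) * Dn i w + Dn i w ^+ 2.
Proof.
rewrite /=; case: ifP => _.
  by rewrite mul0r addr0 lerDl sqr_ge0.
have -> : Uf Dn i w ^+ 2 + 2 * Uf Dn i w * Dn i w + Dn i w ^+ 2 =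
  (Uf Dn i w + Dn i w) ^+ 2 by ring.
case: ifP => // _.
by rewrite expr0n /= sqr_ge0.
Qed.

Arguments weight_le0 {d T R P G X g} M.
Arguments Gmeas_meas {d T R G g}.
Arguments Uf_meas {d T R H Dn}.

Lemma intD_R (d : measure_display) (T : measurableType d) (R : realType)
  (P : probability T R) (f g : T -> R) :
  P.-integrable setT (EFin \o f) -> P.-integrable setT (EFin \o g) ->
  (\int[P]_w ((EFin \o (fun w => (f w + g w)%R)) w) =
   \int[P]_w ((EFin \o f) w) + \int[P]_w ((EFin \o g) w))%E.
Proof. by move=> hf hg; rewrite -integralD_EFin. Qed.

Lemma iadd (d : measure_display) (T : measurableType d) (R : realType)
  (P : probability T R) (f g : T -> R) :
  P.-integrable setT (EFin \o f) -> P.-integrable setT (EFin \o g) ->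
  P.-integrable setT (EFin \o (fun w => f w + g w)).
Proof.
move=> hf hg.
by apply: (eq_integrable measurableT _ _ _ (integrableD measurableT hf hg)).
Qed.

Arguments intD_R {d T R P f g}.
Arguments iadd {d T R P f g}.

Lemma intsq (d : measure_display) (T : measurableType d) (R : realType)
  (P : probability T R) (f : T -> R) :
  measurable_fun setT f -> (\int[P]_w ((f w ^+ 2)%:E) < +oo)%E ->
  P.-integrable setT (EFin \o (fun w => f w ^+ 2)).
Proof.
move=> mf fi; apply/integrableP; split.
  by apply/measurable_EFinP; exact: measurable_funX.
rewrite (eq_integral (fun w => (f w ^+ 2)%:E)) // => x _ /=.
by rewrite ger0_norm // sqr_ge0.
Qed.

Arguments intsq {d T R P f}.

Lemma Uf_int (d : measure_display) (T : measurableType d) (R : realType)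
  (P : probability T R) (H : nat -> set (set T)) (Dn : nat -> T -> R) :
  (forall i, sigma_algebra setT (H i)) -> (forall i, H i `<=` measurable) ->
  (forall i, H i `<=` H i.+1) ->
  (forall i, G_measurable_fun (H i.+1) (Dn i)) ->
  (forall i, cond_exp_le0 P (H i) (Dn i)) ->
  (forall i, \int[P]_w ((Dn i w ^+ 2)%:E) < +oo)%E ->
  forall i, (\int[P]_w ((Uf Dn i w ^+ 2)%:E) <=
             \sum_(j < i) \int[P]_w ((Dn j w ^+ 2)%:E))%E.
Proof.
move=> sH HP Hinc mD cD vfin.
have mU i : measurable_fun setT (Uf Dn i) := Gmeas_meas (HP i) (Uf_meas sH Hinc mD i).
have mDn i : measurable_fun setT (Dn i) := Gmeas_meas (HP i.+1) (mD i).
elim=> [|i IH].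
  rewrite big_ord0 (eq_integral (fun _ => 0%E)) ?integral0 // => x _ /=.
  by rewrite expr2 mul0r.
rewrite big_ord_recr.
pose g := fun w => if 1 <= Uf Dn i w then 0 else 2 * Uf Dn i w.
have mg : G_measurable_fun (H i) g.
  apply/(GmeasP (sH i)); apply: measurable_fun_ifT.
  - by apply: measurable_fun_ler; [exact: measurable_cst | exact/(GmeasP (sH i))/Uf_meas].
  - exact: measurable_cst.
  - by apply: measurable_funM; [exact: measurable_cst | exact/(GmeasP (sH i))/Uf_meas].
have g02 w : 0 <= g w <= 2.
  rewrite /g; case: ifPn => [_|]; first by rewrite lexx ler0n.
  rewrite -ltNge => h; rewrite mulr_ge0 ?Uf_ge0 //=.
  by rewrite -[leRHS]mulr1 ler_wpM2l // ltW.
have sumfin : (\sum_(j < i) \int[P]_w ((Dn j w ^+ 2)%:E) < +oo)%E.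
  by apply: lte_sum_pinfty => j _; exact: vfin.
have iU := intsq (mU i) (le_lt_trans IH sumfin).
have iD2 := intsq (mDn i) (vfin i).
have bg : [bounded g x : R^o | x in setT].
  by apply: (@bounded_le _ _ _ 2) => x; have /andP[h1 h2] := g02 x; rewrite ger0_norm.
have igD : P.-integrable setT (EFin \o (fun w => g w * Dn i w)).
  have [iX _] := cD i.
  apply: (eq_integrable measurableT _ _ _ (integrableMr measurableT (Gmeas_meas (HP i) mg) bg iX)).
  by move=> x _.
have iR := iadd (iadd iU igD) iD2.
apply: le_trans (ge0_le_integral P measurableT _ _ (measurable_int _ iR) _) _.
- by move=> x _; rewrite lee_fin sqr_ge0.
- by apply/measurable_EFinP; exact: measurable_funX.
- by move=> x _; rewrite lee_fin; exact: Uf_step.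
rewrite (intD_R (iadd iU igD) iD2) (intD_R iU igD).
apply: leeD => //.
rewrite -[X in (_ <= X)%E]adde0; apply: leeD => //.
exact: (weight_le0 2 (cD i) (HP i) mg g02).
Qed.

Lemma limn_esup_ev (R : realType) (u : (\bar R)^nat) (x : \bar R) :
  (limn_esup u < x)%E -> exists N, forall k, (N <= k)%N -> (u k < x)%E.
Proof.
rewrite limn_esup_lim (cvg_lim _ (@cvg_esups_inf _ u)) //.
move=> /ereal_inf_lt [_ [N _ <-]] hN.
exists N => k Nk; apply: le_lt_trans hN.
by apply: ereal_sup_ubound; exists k.
Qed.

Lemma limn_esup_bnd (R : realType) (u : (\bar R)^nat) (M : \bar R) (N : nat) :
  (forall k, (N <= k)%N -> (u k <= M)%E) -> (limn_esup u <= M)%E.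
Proof.
move=> h; rewrite limn_esup_lim; apply: lime_le; first exact: is_cvg_esups.
near=> n; apply: ge_ereal_sup => _ [k /= nk <-]; apply: h.
by apply: leq_trans nk; near: n; exists N.
Unshelve. all: by end_near. Qed.

Lemma path_bound (T : Type) (R : realType) (xi : nat -> T -> R) (Dn : nat -> T -> R)
  (a c : R) (N : nat) (w : T) :
  0 < c ->
  (forall i, Dn i w = (xi (N+i)%N.+1 w - xi (N+i)%N w) *
                 \1_[set w' | a <= xi (N+i)%N w'] w) ->
  (forall k, (N <= k)%N -> xi k w < a < xi k.+1 w -> xi k.+1 w - a < c) ->
  (forall i, Uf Dn i w < 1) ->
  forall i, xi (N+i)%N w <= Num.max (xi N w) (a + c) + Uf Dn i w.
Proof.
move=> c0 hD hov hU.
have C1 : xi N w <= Num.max (xi N w) (a + c) by rewrite le_max lexx.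
have C2 : a + c <= Num.max (xi N w) (a + c) by rewrite le_max lexx orbT.
move: C1 C2; set C := Num.max _ _ => C1 C2.
elim=> [|i IH]; first by rewrite addn0 /= addr0.
have u0 := Uf_ge0 _ _ Dn i w.
have hUi : (1 <= Uf Dn i w) = false by apply/negbTE; rewrite -ltNge; exact: hU.
rewrite UfS /= hUi addnS.
have := hov (N + i)%N (leq_addr _ _).
rewrite hD indicE /=.
case: (boolP (w \in [set w' | a <= xi (N + i)%N w'])) => hin /=.
  have ha : a <= xi (N + i)%N w by move: hin => /set_mem.
  rewrite mulr1.
  by case: ifP => h0 _; lra.
have ha : xi (N + i)%N w < a.
  by rewrite ltNge; apply/negP => h; apply: (negP hin); apply/mem_set.
rewrite mulr0 addr0 => hov'.
rewrite u0.
have [hx|hx] := leP (xi (N + i).+1 w) a; first lra.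
have := hov' (introT andP (conj ha hx)); lra.
Qed.

Lemma Uf_set_meas (d : measure_display) (T : measurableType d) (R : realType)
  (Dn : nat -> T -> R) i :
  measurable_fun setT (Uf Dn i) -> measurable [set w | 1 <= Uf Dn i w].
Proof.
move=> mU; have := mU measurableT _ (measurable_itv `[1, +oo[).
rewrite setTI; congr measurable; apply/seteqP; split => w /=;
  by rewrite in_itv /= andbT.
Qed.

Arguments Uf_set_meas {d T R Dn i}.
Arguments Uf_int {d T R P H Dn}.

Lemma Uf_union (d : measure_display) (T : measurableType d) (R : realType)
  (P : probability T R) (H : nat -> set (set T)) (Dn : nat -> T -> R) (c : \bar R) :
  (forall i, sigma_algebra setT (H i)) -> (forall i, H i `<=` measurable) ->
  (forall i, H i `<=` H i.+1) ->
  (forall i, G_measurable_fun (H i.+1) (Dn i)) ->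
  (forall i, cond_exp_le0 P (H i) (Dn i)) ->
  (forall i, \int[P]_w ((Dn i w ^+ 2)%:E) < +oo)%E ->
  (forall i, (\sum_(j < i) \int[P]_w ((Dn j w ^+ 2)%:E) <= c)%E) ->
  (P (\bigcup_i [set w | (1 <= Uf Dn i w)%R]) <= c)%E.
Proof.
move=> sH HP Hinc mD cD vfin hc.
have mU i : measurable_fun setT (Uf Dn i) := Gmeas_meas (HP i) (Uf_meas sH Hinc mD i).
have mA i := Uf_set_meas (mU i).
have nd : nondecreasing_seq (fun i => [set w | 1 <= Uf Dn i w]).
  move=> m n /subnK <-; apply/subsetPset; elim: (n - m)%N => [|k IHk] w /= h; first by [].
  have h2 : 1 <= Uf Dn (k + m) w := IHk w h.
  by rewrite h2.
have hcv := @nondecreasing_cvg_mu _ _ _ P (fun i => [set w | 1 <= Uf Dn i w]) mA (bigcupT_measurable _ mA) nd.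
rewrite -(cvg_lim _ hcv) //; apply: lime_le; first by apply/cvg_ex; eexists; exact: hcv.
apply: nearW => i /=.
apply: le_trans (hc i).
apply: le_trans (Uf_int sH HP Hinc mD cD vfin i).
rewrite -(setIT [set w | 1 <= Uf Dn i w]) -integral_indic //.
apply: ge0_le_integral => //.
- by apply/measurable_EFinP; exact: measurable_indic.
- by apply/measurable_EFinP; exact: measurable_funX.
- move=> x _; rewrite lee_fin indicE.
  case: (boolP (x \in _)) => /= h.
    have h1 : 1 <= Uf Dn i x by move: h => /set_mem.
    by rewrite expr2; apply: (le_trans h1); rewrite ler_peMr // (le_trans _ h1).
  exact: sqr_ge0.
Qed.

Lemma ge_set_meas (d : measure_display) (T : measurableType d) (R : realType)
  (f : T -> R) (a : R) :
  measurable_fun setT f -> measurable [set w | a <= f w].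
Proof.
move=> mf; have := mf measurableT _ (measurable_itv `[a, +oo[).
rewrite setTI; congr measurable; apply/seteqP; split => w /=;
  by rewrite in_itv /= andbT.
Qed.

Arguments path_bound {T R xi Dn a c N w}.

Theorem mainTheorem3 (d : measure_display) (T : measurableType d) (R : realType)
  (P : probability T R) (F : nat -> set (set T)) (xi : nat -> T -> R)
  (a b : R) :
  filtration F -> adapted F xi -> 0 < b ->
  (forall k, cond_exp_le0 P (F k)
     (fun w => (xi k.+1 w - xi k w) * \1_[set w' | a <= xi k w'] w)) ->
  {ae P, forall w, (limn_esup (fun k =>
     (\1_[set w' | xi k w' < a < xi k.+1 w'] w * (xi k.+1 w - a))%:E) <= b%:E)%E} ->
  (\sum_(0 <= k <oo)
     \int[P]_w (((xi k.+1 w - xi k w) ^+ 2 * \1_[set w' | a <= xi k w'] w)%:E)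
     < +oo)%E ->
  {ae P, forall w, (limn_esup (fun n => (xi n w)%:E) < +oo)%E}.
Proof.
move=> [sF FP Finc] adF b0 hcond hover hsum.
pose D := fun k w => (xi k.+1 w - xi k w) * \1_[set w' | a <= xi k w'] w.
pose v := fun k => (\int[P]_w (((xi k.+1 w - xi k w) ^+ 2 * \1_[set w' | a <= xi k w'] w)%:E))%E.
have v0 k : (0 <= v k)%E.
  apply: integral_ge0 => w _; rewrite lee_fin mulr_ge0 ?sqr_ge0 //.
have vD k : (\int[P]_w ((D k w ^+ 2)%:E))%E = v k.
  apply: eq_integral => w _; congr EFin; rewrite /D exprMn /indic.
  have sqb : forall bb : bool, (bb%:R ^+ 2 : R) = bb%:R.
    by case; rewrite /= ?expr1n // expr2 mulr0.
  by rewrite sqb.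
have vfin k : (v k < +oo)%E.
  apply: le_lt_trans hsum.
  apply: le_trans (nneseries_lim_ge k.+1 _); last by move=> n _ _; exact: v0.
  rewrite big_nat_recr //=; apply: leeDr.
  by apply: sume_ge0 => n _; exact: v0.
have Fmono k n : (k <= n)%N -> F k `<=` F n.
  move=> /subnK <-; elim: (n - k)%N => [|j IHj] //.
  by rewrite addSn; apply: subset_trans (Finc _).
have mxi k n : (k <= n)%N -> measurable_fun (setT : set (g_sigma_algebraType (F n))) (xi k).
  by move=> kn; apply/(GmeasP (sF n)) => B mB; apply: (Fmono _ _ kn); exact: adF.
have mD k : G_measurable_fun (F k.+1) (D k).
  apply/(GmeasP (sF k.+1)); apply: measurable_funM.
    by apply: measurable_funB; apply: mxi.
  by apply: measurable_indic; apply: ge_set_meas; apply: mxi.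
pose Dn N := fun i => D (N + i)%N.
pose E N := \bigcup_i [set w | 1 <= Uf (Dn N) i w].
pose tail N := (\sum_(N <= k <oo) v k)%E.
have sH N i : sigma_algebra setT (F (N + i)%N) by exact: sF.
have HP N i : F (N + i)%N `<=` measurable by exact: FP.
have Hinc N i : F (N + i)%N `<=` F (N + i.+1)%N by rewrite addnS; exact: Finc.
have mDn N i : G_measurable_fun (F (N + i.+1)%N) (Dn N i) by rewrite addnS; exact: mD.
have cDn N i : cond_exp_le0 P (F (N + i)%N) (Dn N i) by exact: hcond.
have vDn N i : (\int[P]_w ((Dn N i w ^+ 2)%:E) < +oo)%E by rewrite vD.
have mE N : measurable (E N).
  apply: bigcupT_measurable => i; apply: Uf_set_meas.
  exact: (Gmeas_meas (HP N i) (Uf_meas (sH N) (Hinc N) (mDn N) i)).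
have PE N : (P (E N) <= tail N)%E.
  apply: (@Uf_union _ _ _ P (fun i => F (N + i)%N) (Dn N) (tail N) (sH N) (HP N) (Hinc N) (mDn N) (cDn N) (vDn N)) => i.
  rewrite (eq_bigr (fun j : 'I_i => v (N + j)%N)); last by move=> j _; exact: vD.
  rewrite (_ : \sum_(j < i) v (N + j)%N = \sum_(N <= k < N + i) v k); last first.
    by rewrite (big_addn 0 (N + i) N) addKn big_mkord; apply: eq_bigr => j _; rewrite addnC.
  by apply: nneseries_lim_ge => n _ _; exact: v0.
pose O w := limn_esup (fun k =>
     (\1_[set w' | xi k w' < a < xi k.+1 w'] w * (xi k.+1 w - a))%:E).
have hN : P.-negligible (~` [set w | (O w <= b%:E)%E]) := hover.
pose B N0 := \bigcap_j E (N0 + j)%N.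
have mB N0 : measurable (B N0) := bigcapT_measurable (fun j => mE (N0 + j)%N).
have tcv : tail N @[N --> \oo] --> 0%E.
  exact: (nneseries_tail_cvg hsum (fun k _ => v0 k)).
have PB N0 : P (B N0) = 0%E.
  apply/eqP; rewrite eq_le measure_ge0 andbT.
  rewrite -(cvg_lim _ tcv) //; apply: lime_ge; first by apply/cvg_ex; eexists; exact: tcv.
  near=> N; apply: le_trans (PE N).
  apply: le_measure; rewrite ?inE; [exact: mB | exact: mE |].
  move=> w hw; have := hw (N - N0)%N I; rewrite subnKC //.
  by near: N; exists N0.
have nB : P.-negligible (\bigcup_N0 B N0).
  by apply: negligible_bigcup => N0; apply/negligibleP => //; exact: PB.
apply: (negligibleS _ (negligibleU hN nB)).
move=> w /= hw.
have [qw|nq] := pselect (O w <= b%:E)%E; last by left.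
right.
have [N0 hN0] : exists N0, forall k, (N0 <= k)%N ->
    ((\1_[set w' | xi k w' < a < xi k.+1 w'] w * (xi k.+1 w - a))%:E < (b + 1)%:E)%E.
  apply: limn_esup_ev; apply: le_lt_trans qw _.
  by rewrite lte_fin ltrDl.
exists N0 => // j _.
apply: contrapT => hE; apply: hw.
set N := (N0 + j)%N.
have hU i : Uf (Dn N) i w < 1.
  by rewrite ltNge; apply/negP => h; apply: hE; exists i.
have hov k : (N <= k)%N -> xi k w < a < xi k.+1 w -> xi k.+1 w - a < b + 1.
  move=> Nk hk; have := hN0 k (leq_trans (leq_addr _ _) Nk).
  by rewrite indicE mem_set //= mul1r lte_fin.
have pb := path_bound (addr_gt0 b0 ltr01) (fun i => erefl) hov hU.
apply: le_lt_trans (ltry ((Num.max (xi N w) (a + (b + 1))) + 1)).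
apply: (@limn_esup_bnd _ _ _ N) => k Nk.
rewrite lee_fin -(subnKC Nk); apply: le_trans (pb (k - N)%N) _.
by rewrite lerD2l ltW.
Unshelve. all: by end_near.
Qed.
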